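(* For every integer $n>2$, the number of pairs $(s,t)\in S_n\times S_n$ such that $[s,t]=sts^{-1}t^{-1}$ is a $3$-cycle and $s$ is a cycle (of some length $k\in\{2,\dots,n\}$, i.e. a single cycle together with fixed points) equals $$\#\mathcal{B}_2(n)=\frac{1}{24}(n-1)(n-2)(n^2+5n+12)\,n!.$$
   Context: Permutations compose as functions. *)

(* Defs.v *)
From mathcomp Require Import all_boot all_fingroup.
Set Implicit Arguments. Unset Strict Implicit. Unset Printing Implicit Defensive.
Local Open Scope group_scope.

(* Convention: in mathcomp, (s * t) x = t (s x).  The paper composes as
   functions, so its [s,t] = s o t o s^-1 o t^-1 is, in mathcomp,
   t^-1 * s^-1 * t * s. *)
Definition commf (n : nat) (s t : 'S_n) : 'S_n := t^-1 * s^-1 * t * s.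

Definition psupp (n : nat) (s : 'S_n) : {set 'I_n} := [set x | s x != x].

Definition is_cycle (n : nat) (s : 'S_n) : bool :=
  (#|[set O in porbits s | (1 < #|O|)%N]| == 1)%N.

Definition is_kcycle (n k : nat) (s : 'S_n) : bool :=
  is_cycle s && (#|psupp s| == k)%N.

Definition B2 (n : nat) : {set 'S_n * 'S_n} :=
  [set p | is_kcycle 3 (commf p.1 p.2) & is_cycle p.1].

(* Main.v *)
Require Import Defs.
From mathcomp Require Import all_boot all_fingroup zify.
Set Implicit Arguments. Unset Strict Implicit. Unset Printing Implicit Defensive.
Local Open Scope group_scope.

Section Basics.
Variable n : nat.
Implicit Types s t u g w : 'S_n.

Lemma porbit_fix s x : s x = x -> porbit s x = [set x].
Proof.
move=> sx; apply/setP=> y; rewrite inE; apply/porbitP/eqP => [[i ->]|->].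
  by rewrite permX_fix.
by exists 0; rewrite expg0 perm1.
Qed.

Lemma porbit_moved s x y : s x != x -> y \in porbit s x -> s y != y.
Proof.
move=> sx /porbitP[i ->]; apply: contra sx => /eqP H.
have: (s ^+ i) (s x) = (s ^+ i) x.
  by rewrite -permM -expgS expgSr permM.
by move/perm_inj=> ->.
Qed.

Lemma porbit_succ s x : porbit s (s x) = porbit s x.
Proof. by have := porbit_perm s 1 x; rewrite expg1. Qed.

Lemma card_porbit_gt1 s x : (1 < #|porbit s x|) = (s x != x).
Proof.
case: (eqVneq (s x) x) => [sx|sx]; first by rewrite porbit_fix // cards1.
have sub: [set x; s x] \subset porbit s x.
  apply/subsetP=> y; rewrite !inE => /orP[]/eqP->; first exact: porbit_id.
  by have := mem_porbit s 1 x; rewrite expg1.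
apply: leq_trans (subset_leq_card sub); rewrite cards2.
by rewrite eq_sym sx.
Qed.

Lemma NT_eq s : [set O in porbits s | 1 < #|O|] = porbit s @: psupp s.
Proof.
apply/setP=> O; rewrite inE; apply/andP/imsetP => [[/imsetP[x _ ->]]|[x]].
  by rewrite card_porbit_gt1 => sx; exists x; rewrite // inE.
rewrite inE => Hx ->; split; first exact: imset_f.
by rewrite card_porbit_gt1.
Qed.

Lemma iscycP s : reflect (exists2 x, s x != x & forall y, s y != y -> y \in porbit s x)
  (is_cycle s).
Proof.
rewrite /is_cycle NT_eq; apply: (iffP cards1P) => [[O HO]|[x sx Hx]].
  have: O \in porbit s @: psupp s by rewrite HO set11.
  case/imsetP=> x; rewrite inE => sx EO; exists x => // y sy.
  have: porbit s y \in porbit s @: psupp s by apply: imset_f; rewrite inE.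
  by rewrite HO inE EO => /eqP <-; apply: porbit_id.
exists (porbit s x); apply/setP => O; rewrite inE; apply/imsetP/eqP => [[y Hy ->]|->].
  by apply/eqP; rewrite eq_porbit_mem; apply: Hx; rewrite inE in Hy.
by exists x; rewrite ?inE.
Qed.

Lemma kcyc_orbit s : is_cycle s -> exists2 x, s x != x & porbit s x = psupp s.
Proof.
case/iscycP=> x sx Hx; exists x => //; apply/setP=> y; rewrite inE.
apply/idP/idP; [exact: porbit_moved | exact: Hx].
Qed.

Lemma kcycle_intro w k (P : {set 'I_n}) x0 :
  (forall y, (w y != y) = (y \in P)) -> #|P| = k -> x0 \in P ->
  (forall y, y \in P -> porbit w y = porbit w x0) -> is_kcycle k w.
Proof.
move=> HP cP xP Hc; apply/andP; split.
  apply/iscycP; exists x0; first by rewrite HP.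
  by move=> y; rewrite HP => yP; rewrite -(Hc y yP) porbit_id.
have ->: psupp w = P by apply/setP=> y; rewrite inE HP.
by rewrite cP.
Qed.

Lemma kcycle_elim w k : is_kcycle k w ->
  forall x y, w x != x -> w y != y -> y \in porbit w x.
Proof.
case/andP=> /iscycP[z sz Hz] _ x y sx sy.
have Ex: porbit w x = porbit w z by apply/eqP; rewrite eq_porbit_mem Hz.
by rewrite Ex Hz.
Qed.

Lemma porbitJ s g x y : (g y \in porbit (s ^ g) (g x)) = (y \in porbit s x).
Proof.
apply/porbitP/porbitP => [[i Hi]|[i ->]].
  by exists i; apply: (@perm_inj _ g); rewrite Hi -conjXg permJ.
by exists i; rewrite -conjXg permJ.
Qed.

Lemma movedJ s g z : ((s ^ g) (g z) != g z) = (s z != z).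
Proof. by rewrite permJ (inj_eq perm_inj). Qed.

Lemma cycleJ_imp s g : is_cycle s -> is_cycle (s ^ g).
Proof.
case/iscycP=> x sx Hx; apply/iscycP; exists (g x); first by rewrite movedJ.
move=> y; rewrite -[y](permKV g) movedJ porbitJ; exact: Hx.
Qed.

Lemma psuppJ s g : #|psupp (s ^ g)| = #|psupp s|.
Proof.
have ->: psupp (s ^ g) = g @: psupp s.
  apply/setP=> y; rewrite -[y](permKV g) inE movedJ (mem_imset _ _ perm_inj).
  by rewrite inE.
by rewrite card_imset //; apply: perm_inj.
Qed.

Lemma kcycleJ s g k : is_kcycle k (s ^ g) = is_kcycle k s.
Proof.
rewrite /is_kcycle psuppJ; congr (_ && _); apply/idP/idP; last exact: cycleJ_imp.
by move/(cycleJ_imp g^-1); rewrite conjgK.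
Qed.

Lemma movedV s z : (s^-1 z != z) = (s z != z).
Proof.
apply/idP/idP; apply: contra => /eqP H; apply/eqP.
  by rewrite -{1}H permK.
by rewrite -{1}H permKV.
Qed.

Lemma cycleV_imp s : is_cycle s -> is_cycle s^-1.
Proof.
case/iscycP=> x sx Hx; apply/iscycP; exists x; first by rewrite movedV.
by move=> y; rewrite movedV porbitV; exact: Hx.
Qed.

Lemma kcycleV s k : is_kcycle k s^-1 = is_kcycle k s.
Proof.
rewrite /is_kcycle.
have ->: psupp s^-1 = psupp s by apply/setP=> y; rewrite !inE movedV.
congr (_ && _); apply/idP/idP; last exact: cycleV_imp.
by move/cycleV_imp; rewrite invgK.
Qed.

Lemma orb_chain w (lo hi : nat) :
  (forall z : 'I_n, lo <= z < hi -> val (w z) = z.+1) ->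
  forall y z : 'I_n, lo <= y -> y <= z -> z <= hi -> porbit w y = porbit w z.
Proof.
move=> H y z; move e: (z - y) => m; elim: m y e => [|m IH] y e hy hyz hz.
  by congr porbit; apply: ord_inj; lia.
rewrite -porbit_succ; apply: IH; rewrite ?H; try lia.
Qed.

End Basics.

Lemma cardS n m : m <= n -> #|[set i : 'I_n | i < m]| = m.
Proof.
move=> hm.
have ->: [set i : 'I_n | i < m] = widen_ord hm @: [set: 'I_m].
  apply/setP=> i; rewrite inE; apply/idP/imsetP => [im|[[j hj] _ ->]] //.
  by exists (Ordinal im) => //; apply: ord_inj.
rewrite card_imset ?cardsT ?card_ord //.
by move=> a b /(congr1 (@nat_of_ord _)) /= /ord_inj.
Qed.

Section Std.
Variables n k : nat.
Hypothesis hk : 1 < k.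
Hypothesis hkn : k <= n.

Definition sv (i : nat) := if i < k then (if i.+1 == k then 0 else i.+1) else i.

Lemma sv_lt (i : 'I_n) : sv i < n.
Proof. rewrite /sv; have := ltn_ord i; case: ifP => ?; [case: eqP => ? |]; lia. Qed.

Definition sigf (i : 'I_n) : 'I_n := insubd i (sv i).

Lemma val_sigf i : (sigf i : nat) = sv i.
Proof. by rewrite val_insubd sv_lt. Qed.

Lemma sigf_inj : injective sigf.
Proof.
move=> i j /(congr1 (@nat_of_ord _)); rewrite !val_sigf /sv => H; apply: ord_inj.
move: H; case: ifP => ?; [case: eqP => ? |]; case: ifP => ?; try case: eqP => ?; lia.
Qed.

Definition std : 'S_n := perm sigf_inj.

Lemma val_std i : (std i : nat) = sv i.
Proof. by rewrite permE val_sigf. Qed.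

Lemma std_moved i : (std i != i) = (i < k).
Proof.
apply/idP/idP => H.
  apply: contraR H => H; apply/eqP; apply: ord_inj; rewrite val_std /sv.
  by rewrite ifF //; apply: negbTE.
apply/eqP => /(congr1 (@nat_of_ord _)); rewrite val_std /sv H /=; case: eqP; lia.
Qed.

Lemma n_pos : 0 < n. Proof. lia. Qed.
Definition o0 : 'I_n := Ordinal n_pos.

Lemma std_kcycle : is_kcycle k std.
Proof.
apply: (@kcycle_intro _ _ _ [set i : 'I_n | i < k] o0).
- by move=> y; rewrite std_moved inE.
- exact: cardS.
- by rewrite inE /=; lia.
move=> y; rewrite inE => yk; symmetry; apply: (@orb_chain _ _ 0 k.-1) => //=; try lia.
move=> z Hz; rewrite val_std /sv ifT; last lia.
by case: eqP => //; lia.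
Qed.

Lemma std_conj s : is_kcycle k s -> exists g, std ^ g = s.
Proof.
move=> Hs; have [x0 sx0 Ox0] := kcyc_orbit (proj1 (andP Hs)).
have cO : #|porbit s x0| = k by rewrite Ox0; apply/eqP; case/andP: Hs.
set C := ~: psupp s.
have cC : #|C| = n - k.
  by rewrite /C cardsCs setCK card_ord -cO Ox0.
set L := traject s x0 k ++ enum C.
have sL : size L = n by rewrite size_cat size_traject -cardE cC; lia.
have uL : uniq L.
  rewrite cat_uniq enum_uniq andbT -{1}cO uniq_traject_porbit /=.
  apply/hasPn => y; rewrite mem_enum /C inE => yC.
  by rewrite -cO -porbit_traject Ox0.
have gi : forall i : 'I_n, nth x0 L i = if i < k then iter i s x0 else nth x0 (enum C) (i - k).
  by move=> i; rewrite nth_cat size_traject; case: ifP => // ?; rewrite nth_traject.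
pose gf (i : 'I_n) := nth x0 L i.
have gf_inj : injective gf.
  by move=> i j /eqP; rewrite /gf nth_uniq ?sL // => /eqP/ord_inj.
exists (perm gf_inj); apply/permP => y.
rewrite -[y](permKV (perm gf_inj)); set i := (perm gf_inj)^-1 y.
rewrite permJ !permE /gf !gi val_sigf /sv.
have [ik|ik] := ltnP i k.
  case: eqP => [e|ne].
    rewrite ifT; last lia.
    by rewrite /= -iterS e -cO iter_porbit.
  by rewrite ifT ?iterS //; lia.
rewrite ifF; last lia.
have: nth x0 (enum C) (i - k) \in C.
  by rewrite -mem_enum mem_nth // -cardE cC; have := ltn_ord i; lia.
by rewrite /C !inE negbK => /eqP ->.
Qed.

End Std.

Section Cyc3.
Variable n : nat.
Implicit Types (a b d x y : 'I_n) (c w : 'S_n).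

Definition cyc3 a b d : 'S_n := tperm a b * tperm a d.

Variables (a b d : 'I_n).
Hypotheses (hab : a != b) (hbd : b != d) (had : a != d).

Lemma cyc3a : cyc3 a b d a = b.
Proof using hab hbd had. by rewrite permM tpermL tpermD // eq_sym. Qed.
Lemma cyc3b : cyc3 a b d b = d.
Proof using hab hbd had. by rewrite permM tpermR tpermL. Qed.
Lemma cyc3d : cyc3 a b d d = a.
Proof using hab hbd had. by rewrite permM (tpermD had hbd) tpermR. Qed.
Lemma cyc3o y : y != a -> y != b -> y != d -> cyc3 a b d y = y.
Proof using hab hbd had. by move=> ya yb yd; rewrite permM !tpermD // eq_sym. Qed.

End Cyc3.

Lemma cyc3_rot n (a b d : 'I_n) : a != b -> b != d -> a != d -> cyc3 a b d = cyc3 b d a.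
Proof.
move=> hab hbd had.
have hdb : d != b by rewrite eq_sym.
have hba : b != a by rewrite eq_sym.
have hda : d != a by rewrite eq_sym.
apply/permP=> y.
case: (eqVneq y a) => [->|ya]; first by rewrite (cyc3a hab hbd had) (cyc3d hbd hda hba).
case: (eqVneq y b) => [->|yb]; first by rewrite (cyc3b hab hbd had) (cyc3a hbd hda hba).
case: (eqVneq y d) => [->|yd]; first by rewrite (cyc3d hab hbd had) (cyc3b hbd hda hba).
by rewrite (cyc3o hab hbd had) // (cyc3o hbd hda hba).
Qed.

Section Cyc3b.
Variables (n : nat) (a b d : 'I_n).
Hypotheses (hab : a != b) (hbd : b != d) (had : a != d).
Lemma cyc3_kcycle : is_kcycle 3 (cyc3 a b d).
Proof using hab hbd had.
apply: (@kcycle_intro _ _ _ [set a; b; d] a).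
- move=> y; rewrite !inE.
  case: (eqVneq y a) => [->|ya]; first by rewrite (cyc3a hab hbd had) /= eq_sym.
  case: (eqVneq y b) => [->|yb]; first by rewrite (cyc3b hab hbd had) orbT /= eq_sym.
  case: (eqVneq y d) => [->|yd]; first by rewrite (cyc3d hab hbd had) orbT.
  by rewrite (cyc3o hab hbd had) // eqxx.
- by rewrite -setUA cardsU1 cards2 hbd !inE negb_or hab had.
- by rewrite !inE eqxx.
move=> y; rewrite !inE => /orP[/orP[]|]/eqP->//.
  by have := porbit_succ (cyc3 a b d) a; rewrite (cyc3a hab hbd had).
have := porbit_succ (cyc3 a b d) b; rewrite (cyc3b hab hbd had) => ->.
by have := porbit_succ (cyc3 a b d) a; rewrite (cyc3a hab hbd had).
Qed.
End Cyc3b.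

Lemma orbit_closed n (w : 'S_n) (I : {set 'I_n}) x :
  (forall y, y \in I -> w y \in I) -> x \in I -> porbit w x \subset I.
Proof.
move=> HI xI; apply/subsetP => y /porbitP[i ->]; rewrite permX.
by elim: i => //= i IH; apply: HI.
Qed.

Lemma kcyc3_elim n (c : 'S_n) x : is_kcycle 3 c -> c x != x ->
  [/\ x != c x, c x != c (c x), x != c (c x) & c = cyc3 x (c x) (c (c x))].
Proof.
move=> Hc cx.
have [x0 _ O0] := kcyc_orbit (proj1 (andP Hc)).
have cP : #|psupp c| = 3 by apply/eqP; case/andP: Hc.
have Ox : porbit c x = psupp c.
  rewrite -O0; apply/eqP; rewrite eq_porbit_mem O0 inE //.
set b := c x; set d := c b.
have h1 : x != b by rewrite eq_sym.
have h2 : b != d by rewrite /d (inj_eq perm_inj) eq_sym.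
have h3 : x != d.
  apply/negP => /eqP xd.
  have: porbit c x \subset [set x; b].
    apply: orbit_closed; last by rewrite !inE eqxx.
    by move=> y; rewrite !inE => /orP[]/eqP->; rewrite -/b ?eqxx ?orbT // -/d -xd eqxx.
  move/subset_leq_card; rewrite Ox cP cards2; by case: (x != b).
have Pe : psupp c = [set x; b; d].
  have sub : [set x; b; d] \subset psupp c.
    rewrite -Ox; apply/subsetP=> y; rewrite !inE => /orP[/orP[]|]/eqP->.
    - exact: porbit_id.
    - by have := mem_porbit c 1 x; rewrite expg1.
    by have := mem_porbit c 2 x; rewrite expgS expg1 permM.
  have c3 : #|[set x; b; d]| = 3 by rewrite -setUA cardsU1 cards2 h2 !inE negb_or h1 h3.
  by apply/eqP; rewrite eq_sym eqEcard sub c3 cP leqnn.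
have dm : c d != d.
  have : d \in psupp c by rewrite Pe !inE eqxx orbT.
  by rewrite inE.
have cdx : c d = x.
  have : c d \in psupp c by rewrite inE (inj_eq perm_inj).
  rewrite Pe !inE => /orP[/orP[]|] /eqP; first by [].
    by rewrite /b => /perm_inj /eqP; rewrite eq_sym (negbTE h3).
  by move/eqP: dm.
split => //; apply/permP => y.
case: (eqVneq y x) => [->|yx]; first by rewrite cyc3a.
case: (eqVneq y b) => [->|yb]; first by rewrite cyc3b.
case: (eqVneq y d) => [->|yd]; first by rewrite cyc3d.
rewrite cyc3o //; apply/eqP.
have : y \notin psupp c by rewrite Pe !inE (negbTE yx) (negbTE yb) (negbTE yd).
by rewrite inE negbK.
Qed.

Lemma ordneq n (x y : 'I_n) : (x : nat) != y -> x != y.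
Proof. by apply: contra => /eqP ->. Qed.

Section H.
Variables n k : nat.
Hypothesis hk : 1 < k.
Hypothesis hkn : k <= n.

Notation sg := (std hk hkn).
Notation E w := (porbit w).

Lemma sgv (i : 'I_n) : (sg i : nat) = if i < k then (if i.+1 == k then 0 else i.+1) else i.
Proof. by rewrite val_std. Qed.

Lemma sg_lt (i : 'I_n) : i.+1 < k -> (sg i : nat) = i.+1.
Proof. by move=> h; rewrite sgv ifT ?ifF //; lia. Qed.
Lemma sg_last (i : 'I_n) : i.+1 = k -> (sg i : nat) = 0.
Proof. by move=> h; rewrite sgv ifT ?ifT //; lia. Qed.
Lemma sg_out (i : 'I_n) : k <= i -> sg i = i.
Proof. by move=> h; apply: ord_inj; rewrite sgv ifF //; lia. Qed.
Lemma sg_ltk (i : 'I_n) : i < k -> sg i < k.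
Proof. by move=> h; rewrite sgv h; case: eqP; lia. Qed.

Lemma kn1 : k.-1 < n. Proof. lia. Qed.
Definition ol : 'I_n := Ordinal kn1.

Definition Sk := [set i : 'I_n | i < k].

Lemma fam1_good (a b d : 'I_n) : a < b -> b < d -> d < k -> is_kcycle k (cyc3 a b d * sg).
Proof.
move=> ab bd dk.
have hab : a != b by apply: ordneq; lia.
have hbd : b != d by apply: ordneq; lia.
have had : a != d by apply: ordneq; lia.
set w := cyc3 a b d * sg.
have wa : (w a : nat) = b.+1 by rewrite permM (cyc3a hab hbd had) sg_lt //; lia.
have wd : (w d : nat) = a.+1 by rewrite permM (cyc3d hab hbd had) sg_lt //; lia.
have wb : (w b : nat) = if d.+1 == k then 0 else d.+1.
  by rewrite permM (cyc3b hab hbd had) sgv ifT.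
have wo : forall y : 'I_n, (y : nat) != a -> (y : nat) != b -> (y : nat) != d -> w y = sg y.
  by move=> y ya yb yd; rewrite permM (cyc3o hab hbd had) // ordneq.
apply: (@kcycle_intro _ _ _ Sk a).
- move=> y; rewrite inE -val_eqE /=.
  case: (eqVneq y a) => [->|ya]; first by rewrite wa; apply/idP/idP; lia.
  case: (eqVneq y b) => [->|yb]; first by rewrite wb; case: ifP => ?; apply/idP/idP; lia.
  case: (eqVneq y d) => [->|yd]; first by rewrite wd; apply/idP/idP; lia.
  rewrite wo; try (apply/eqP => /ord_inj; by apply/eqP).
  by rewrite sgv; case: ifP => ?; try case: ifP => ?; apply/idP/idP; lia.
- exact: cardS.
- by rewrite inE; lia.
have h1 : forall y : 'I_n, y <= a -> E w y = E w a.
  move=> y hy; apply: (@orb_chain _ w 0 a) => //= z hz.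
  by rewrite wo ?sg_lt //; lia.
have h2 : forall y : 'I_n, a < y <= b -> E w y = E w b.
  move=> y hy; apply: (@orb_chain _ w a.+1 b); try lia; move=> z hz /=.
  by rewrite wo ?sg_lt //; lia.
have h3 : forall y : 'I_n, b < y <= d -> E w y = E w d.
  move=> y hy; apply: (@orb_chain _ w b.+1 d); try lia; move=> z hz /=.
  by rewrite wo ?sg_lt //; lia.
have h4 : forall y : 'I_n, d < y < k -> E w y = E w ol.
  move=> y hy; apply: (@orb_chain _ w d.+1 k.-1); rewrite /=; try lia; move=> z hz /=.
  by rewrite wo ?sg_lt //; lia.
have Ead : E w a = E w d by rewrite -porbit_succ h3 //; rewrite wa; lia.
have Edb : E w d = E w b by rewrite -porbit_succ h2 //; rewrite wd; lia.
have Eba : E w b = E w a.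
  rewrite -porbit_succ; move: wb; case: ifP => dk1 wb.
    by rewrite h1 // wb.
  rewrite h4; last by rewrite wb; lia.
  rewrite -porbit_succ h1 // wo /=; try lia.
  by rewrite sg_last //=; lia.
move=> y; rewrite inE => yk.
have [ya|ay] := leqP y a; first exact: h1.
have [yb|by_] := leqP y b; first by rewrite h2 ?Eba //; lia.
have [yd|dy] := leqP y d; first by rewrite h3 ?Edb ?Eba //; lia.
rewrite h4; last lia.
rewrite -porbit_succ h1 // wo /=; try lia.
by rewrite sg_last //=; lia.
Qed.

Lemma fam2_good (x q : 'I_n) : k <= x -> q < k -> is_kcycle k (cyc3 x (sg q) q * sg).
Proof.
move=> xk qk; set p := sg q.
have pk : p < k := sg_ltk qk.
have pv : (p : nat) = if q.+1 == k then 0 else q.+1 by rewrite /p sgv qk.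
have hxp : x != p by apply: ordneq; lia.
have hpq : p != q by rewrite /p std_moved.
have hxq : x != q by apply: ordneq; lia.
set w := cyc3 x p q * sg.
have wx : w x = sg p by rewrite permM (cyc3a hxp hpq hxq).
have wp : w p = p by rewrite permM (cyc3b hxp hpq hxq).
have wq : w q = x by rewrite permM (cyc3d hxp hpq hxq) sg_out.
have wo : forall y : 'I_n, (y : nat) != x -> (y : nat) != p -> (y : nat) != q -> w y = sg y.
  by move=> y ya yb yd; rewrite permM (cyc3o hxp hpq hxq) // ordneq.
have Ex : E w x = E w q by have := porbit_succ w q; rewrite wq.
apply: (@kcycle_intro _ _ _ (x |: (Sk :\ p)) q).
- move=> y; rewrite !inE.
  case: (eqVneq y x) => [->|yx].
    by rewrite wx /=; apply: ordneq; have := sg_ltk pk; lia.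
  case: (eqVneq y p) => [->|yp]; first by rewrite wp eqxx.
  case: (eqVneq y q) => [->|yq]; first by rewrite wq qk /= hxq.
  rewrite /= wo; try (apply/eqP => /ord_inj /eqP; by apply/negP).
  by rewrite std_moved.
- rewrite cardsU1 !inE (negbTE hxp) /=.
  have := cardsD1 p Sk; rewrite cardS // inE pk.
  have -> : (x < k) = false by lia.
  by move=> ->.
- by rewrite !inE qk andbT [q == p]eq_sym hpq orbT.
move=> y; rewrite !inE => /orP[/eqP->//|/andP[yp yk]].
have ypn : (y : nat) != p by apply/eqP => /ord_inj /eqP; apply/negP.
case: eqP pv => qe pv.
  apply: (@orb_chain _ w 1 q); rewrite /=; try lia.
  move=> z hz /=; rewrite wo; try lia; rewrite sg_lt; lia.
have h1 : forall y : 'I_n, y <= q -> E w y = E w q.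
  move=> y' hy; apply: (@orb_chain _ w 0 q) => //= z hz.
  by rewrite wo; try lia; rewrite sg_lt; lia.
have [yq|qy] := leqP y q; first exact: h1.
have h4 : forall y : 'I_n, p < y < k -> E w y = E w ol.
  move=> y' hy; apply: (@orb_chain _ w p.+1 k.-1); rewrite /=; try lia; move=> z hz /=.
  by rewrite wo; try lia; rewrite sg_lt; lia.
rewrite h4; last lia.
rewrite -porbit_succ wo /=; try lia.
apply: h1; rewrite sg_last /=; lia.
Qed.

Lemma fam_bad (x y z : 'I_n) : x < y -> y < z -> z < k ->
  (cyc3 x z y * sg) x != x -> (cyc3 x z y * sg) y != y -> ~~ is_kcycle k (cyc3 x z y * sg).
Proof.
move=> xy yz zk mx my.
have hxz : x != z by apply: ordneq; lia.
have hzy : z != y by apply: ordneq; lia.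
have hxy : x != y by apply: ordneq; lia.
set w := cyc3 x z y * sg.
apply/negP => /kcycle_elim /(_ y x my mx) => xO.
have : porbit w y \subset [set u : 'I_n | x < u <= y].
  apply: orbit_closed; last by rewrite inE; lia.
  move=> u; rewrite !inE => hu.
  case: (eqVneq u y) => [->|uy].
    by rewrite permM (cyc3d hxz hzy hxy) sg_lt /=; lia.
  have uy' : (u : nat) != y by apply/eqP => /ord_inj /eqP; apply/negP.
  rewrite permM (cyc3o hxz hzy hxy) //; try (apply: ordneq; lia).
  rewrite sg_lt; lia.
by move/subsetP/(_ x xO); rewrite inE; lia.
Qed.


Lemma bool_cases (ma mb md ia ib id : bool) :
  (ma + mb + md = ia + ib + id)%N -> (~~ ma -> ia && ib) -> (~~ mb -> ib && id) ->
  (~~ md -> id && ia) ->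
  [\/ [&& ia, ib, id, ma, mb & md], [&& ia, ib, ~~ id & ~~ ma],
       [&& ~~ ia, ib, id & ~~ mb] | [&& ia, ~~ ib, id & ~~ md]].
Proof.
case: ma; case: mb; case: md; case: ia; case: ib; case: id => //= e h1 h2 h3;
 try (by constructor 1); try (by constructor 2); try (by constructor 3); try (by constructor 4);
 try (by move: (h1 isT)); try (by move: (h2 isT)); try (by move: (h3 isT)).
Qed.

Lemma conv (c : 'S_n) : is_kcycle 3 c -> is_kcycle k (c * sg) ->
  (exists a b d : 'I_n, [/\ a < b, b < d, d < k & c = cyc3 a b d]) \/
  (exists x q : 'I_n, [/\ k <= x, q < k & c = cyc3 x (sg q) q]).
Proof.
move=> H3 Hk.
have [a ma _] := kcyc_orbit (proj1 (andP H3)).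
have [hab hbd had ce] := kcyc3_elim H3 ma.
move: hab hbd had ce; set b := c a; set d := c b => hab hbd had ce.
have ca : c a = b by [].
have cb : c b = d by [].
have cd : c d = a by rewrite ce (cyc3d hab hbd had).
have co : forall y, y != a -> y != b -> y != d -> c y = y.
  by move=> y ya yb yd; rewrite ce (cyc3o hab hbd had).
set w := c * sg.
have wE : forall y, w y = sg (c y) by move=> y; rewrite permM.
have cw : #|psupp w| = k by apply/eqP; case/andP: Hk.
have hba : (b == a) = false by apply/negbTE; rewrite eq_sym.
have hdb : (d == b) = false by apply/negbTE; rewrite eq_sym.
have hda : (d == a) = false by apply/negbTE; rewrite eq_sym.
have Pe : psupp w :\ a :\ b :\ d = Sk :\ a :\ b :\ d.
  apply/setP=> y; rewrite !inE.
  case: (eqVneq y d) => // yd; case: (eqVneq y b) => // yb; case: (eqVneq y a) => // ya.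
  by rewrite wE co // std_moved.
have e1 := cardsD1 a (psupp w).
have e2 := cardsD1 b (psupp w :\ a).
have e3 := cardsD1 d (psupp w :\ a :\ b).
have f1 := cardsD1 a Sk.
have f2 := cardsD1 b (Sk :\ a).
have f3 := cardsD1 d (Sk :\ a :\ b).
rewrite !inE hba hda hdb /= in e1 e2 e3 f1 f2 f3.
rewrite Pe in e3; rewrite cardS // in f1.
set X := #|Sk :\ a :\ b :\ d|.
have E1 : k = ((w a != a) + (w b != b) + (w d != d) + X)%N by rewrite -cw e1 e2 e3 !addnA.
have E2 : k = ((a < k) + (b < k) + (d < k) + X)%N by rewrite {1}f1 f2 f3 !addnA.
have eq : ((w a != a) + (w b != b) + (w d != d) = (a < k) + (b < k) + (d < k))%N.
  by apply/eqP; rewrite -(eqn_add2r X) -E1 -E2.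
have nm : forall y, c y != y -> ~~ (w y != y) -> (y < k) && (c y < k).
  move=> y cy; rewrite negbK wE => /eqP sy.
  have cyk : c y < k.
    rewrite ltnNge; apply/negP => ky; move: cy; rewrite -{2}sy sg_out //.
    by rewrite eqxx.
  by rewrite cyk andbT -sy sg_ltk.
have mbm : c b != b by rewrite cb eq_sym.
have mdm : c d != d by rewrite cd.
have A := nm a ma; rewrite ca in A.
have B := nm b mbm; rewrite cb in B.
have D := nm d mdm; rewrite cd in D.
have hba' : b != a by rewrite eq_sym.
have hda' : d != a by rewrite eq_sym.
have hdb' : d != b by rewrite eq_sym.
have rot1 : c = cyc3 b d a by rewrite ce (cyc3_rot hab hbd had).
have rot2 : c = cyc3 d a b by rewrite rot1 (cyc3_rot hbd hda' hba').
have vab : (a : nat) != b by apply/eqP => /ord_inj /eqP; apply/negP.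
have vbd : (b : nat) != d by apply/eqP => /ord_inj /eqP; apply/negP.
have vad : (a : nat) != d by apply/eqP => /ord_inj /eqP; apply/negP.
case: (bool_cases eq A B D).
- case/and5P => ia ib id mwa /andP[mwb mwd].
  clear e1 e2 e3 f1 f2 f3 E1 E2 eq Pe.
  have vdb : (d : nat) != b by rewrite eq_sym.
  have vda : (d : nat) != a by rewrite eq_sym.
  move: vab; rewrite neq_ltn => /orP[ab|ba].
  + move: vbd; rewrite neq_ltn => /orP[bd|db].
      by left; exists a, b, d; split.
    move: vad; rewrite neq_ltn => /orP[ad|da].
      have := fam_bad ad db ib; rewrite -ce => /(_ mwa mwd).
      by rewrite Hk.
    by left; exists d, a, b; split.
  + move: vbd; rewrite neq_ltn => /orP[bd|db].
      move: vad; rewrite neq_ltn => /orP[ad|da].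
        have := fam_bad ba ad id; rewrite -rot1 => /(_ mwb mwa).
        by rewrite Hk.
      by left; exists b, d, a; split.
    have := fam_bad db ba ia; rewrite -rot2 => /(_ mwd mwb).
    by rewrite Hk.
- case/and4P => ia ib nd /negPn /eqP.
  rewrite wE ca => sb.
  by right; exists d, b; split; rewrite // ?sb // leqNgt.
- case/and4P => na ib id /negPn /eqP.
  rewrite wE cb => sd.
  by right; exists a, d; split; rewrite // ?sd // leqNgt.
case/and4P => ia nb id /negPn /eqP.
rewrite wE cd => sa.
by right; exists b, a; split; rewrite // ?sa // leqNgt.
Qed.


End H.

Section Count.
Variable n : nat.

Definition T2 m := [set p : 'I_n * 'I_n | (p.1 < p.2) && (p.2 < m)].
Definition T3 m := [set p : 'I_n * 'I_n * 'I_n | (p.1.1 < p.1.2) && (p.1.2 < p.2) && (p.2 < m)].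

Lemma cardT2 m : m <= n -> #|T2 m| = 'C(m, 2).
Proof.
elim: m => [|m IH] hm.
  by apply/eqP; rewrite cards_eq0; apply/eqP/setP => -[a b]; rewrite !inE /=; lia.
pose om : 'I_n := Ordinal hm.
have -> : T2 m.+1 = T2 m :|: [set (a, om) | a in [set i : 'I_n | i < m]].
  apply/setP => -[a b]; rewrite /T2 !inE /=; apply/idP/orP.
    case/andP => ab; rewrite ltnS leq_eqVlt => /orP[/eqP bm|bm]; last by left; rewrite ab.
    right; apply/imsetP; exists a; first by rewrite inE -bm.
    by congr pair; apply: ord_inj.
  case=> [/andP[ab bm]|/imsetP[a' ha' [-> ->]]]; first by rewrite ab; lia.
  by rewrite inE in ha'; rewrite /om /= ha' ltnSn.
rewrite cardsU IH ?(ltnW hm) // card_imset; last by move=> x y [].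
rewrite cardS ?(ltnW hm) //.
have -> : T2 m :&: [set (a, om) | a in [set i : 'I_n | i < m]] = set0.
  apply/setP => -[a b]; rewrite !inE; apply/negP => /andP[/andP[_ bm] /imsetP[a' _ [_ e]]].
  by move: bm; rewrite e /= ltnn.
by rewrite cards0 subn0 binS bin1.
Qed.

Lemma cardT3 m : m <= n -> #|T3 m| = 'C(m, 3).
Proof.
elim: m => [|m IH] hm.
  by apply/eqP; rewrite cards_eq0; apply/eqP/setP => -[[a b] d]; rewrite !inE /=; lia.
pose om : 'I_n := Ordinal hm.
have -> : T3 m.+1 = T3 m :|: [set (p, om) | p in T2 m].
  apply/setP => -[[a b] d]; rewrite /T3 !inE /=; apply/idP/orP.
    case/andP => /andP[ab bd]; rewrite ltnS leq_eqVlt => /orP[/eqP dm|dm]; last by left; rewrite ab bd.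
    right; apply/imsetP; exists (a, b); first by rewrite inE /= ab -dm.
    by congr pair; apply: ord_inj.
  case=> [/andP[/andP[ab bd] dm]|/imsetP[[a' b'] ha' [-> -> ->]]]; first by rewrite ab bd; lia.
  by rewrite /T2 inE /= in ha'; rewrite /om /=; case/andP: ha' => -> -> /=.
rewrite cardsU IH ?(ltnW hm) // card_imset; last by move=> x y [].
rewrite cardT2 ?(ltnW hm) //.
have -> : T3 m :&: [set (p, om) | p in T2 m] = set0.
  apply/setP => -[[a b] d]; rewrite !inE; apply/negP => /andP[/andP[_ dm] /imsetP[a' _ [_ e]]].
  by move: dm; rewrite e /= ltnn.
by rewrite cards0 subn0 binS.
Qed.

End Count.

Section G.
Variables n k : nat.
Hypothesis hk : 1 < k.
Hypothesis hkn : k <= n.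
Notation sg := (std hk hkn).

Definition f1 (p : 'I_n * 'I_n * 'I_n) := cyc3 p.1.1 p.1.2 p.2.
Definition f2 (p : 'I_n * 'I_n) := cyc3 p.1 (sg p.2) p.2.
Definition D2 := [set p : 'I_n * 'I_n | (k <= p.1) && (p.2 < k)].

Lemma f1_fix (a b d y : 'I_n) : a < b -> b < d -> y < a -> cyc3 a b d y = y.
Proof.
move=> ab bd ya; apply: cyc3o; apply: ordneq; lia.
Qed.

Lemma f1_inj_aux (a b d a' b' d' : 'I_n) : a < b -> b < d -> a' < b' -> b' < d' ->
  cyc3 a b d = cyc3 a' b' d' -> a' < a -> False.
Proof.
move=> ab bd ab' bd' e aa.
have hab : a' != b' by apply: ordneq; lia.
have hbd : b' != d' by apply: ordneq; lia.
have had : a' != d' by apply: ordneq; lia.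
have := f1_fix ab bd aa; rewrite e (cyc3a hab hbd had) => /(congr1 (@nat_of_ord _)).
lia.
Qed.

Lemma f1_inj : {in T3 n k &, injective f1}.
Proof.
move=> [[a b] d] [[a' b'] d']; rewrite /T3 !inE /= => /andP[/andP[ab bd] dk] /andP[/andP[ab' bd'] dk'].
rewrite /f1 /= => e.
have hab : a != b by apply: ordneq; lia.
have hbd : b != d by apply: ordneq; lia.
have had : a != d by apply: ordneq; lia.
have ea : a = a'.
  apply: ord_inj; case: (ltngtP a a') => // h.
    by case: (f1_inj_aux ab' bd' ab bd (esym e) h).
  by case: (f1_inj_aux ab bd ab' bd' e h).
subst a'.
have hab' : a != b' by apply: ordneq; lia.
have hbd' : b' != d' by apply: ordneq; lia.
have had' : a != d' by apply: ordneq; lia.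
have eb : b = b'.
  by have := cyc3a hab hbd had; rewrite e (cyc3a hab' hbd' had').
subst b'.
have ed : d = d'.
  by have := cyc3b hab hbd had; rewrite e (cyc3b hab' hbd' had').
by subst d'.
Qed.

Lemma f2_inj : {in D2 &, injective f2}.
Proof.
move=> [x q] [x' q']; rewrite /D2 !inE /= => /andP[xk qk] /andP[xk' qk'].
rewrite /f2 /= => e.
have pk := sg_ltk hk hkn qk.
have pk' := sg_ltk hk hkn qk'.
have h1 : x != sg q by apply: ordneq; lia.
have h2 : sg q != q by rewrite std_moved.
have h3 : x != q by apply: ordneq; lia.
have h1' : x' != sg q' by apply: ordneq; lia.
have h2' : sg q' != q' by rewrite std_moved.
have h3' : x' != q' by apply: ordneq; lia.
have ex : x = x'.
  apply/eqP; apply/negPn/negP => nx.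
  have := cyc3a h1 h2 h3; rewrite e (cyc3o h1' h2' h3') //; last 2 first.
  - by apply: ordneq; lia.
  - by apply: ordneq; lia.
  by move/(congr1 (@nat_of_ord _)); lia.
subst x'.
have := cyc3a h1 h2 h3; rewrite e (cyc3a h1' h2' h3') => /perm_inj ->.
by [].
Qed.

Lemma card_G : #|[set c | is_kcycle 3 c && is_kcycle k (c * sg)]| = 'C(k, 3) + (n - k) * k.
Proof.
have -> : [set c | is_kcycle 3 c && is_kcycle k (c * sg)] = f1 @: T3 n k :|: f2 @: D2.
  apply/setP => c; rewrite !inE; apply/idP/idP.
    case/andP => H3 Hk; case: (conv H3 Hk) => [[a [b [d [ab bd dk ->]]]]|[x [q [xk qk ->]]]].
      by apply/orP; left; apply/imsetP; exists ((a, b), d); rewrite // /T3 inE /= ab bd dk.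
    by apply/orP; right; apply/imsetP; exists (x, q); rewrite // /D2 inE /= xk qk.
  case/orP => /imsetP[].
    move=> [[a b] d]; rewrite /T3 inE /= => /andP[/andP[ab bd] dk] ->.
    have hab : a != b by apply: ordneq; lia.
    have hbd : b != d by apply: ordneq; lia.
    have had : a != d by apply: ordneq; lia.
    by rewrite /f1 /= cyc3_kcycle // fam1_good.
  move=> [x q]; rewrite /D2 inE /= => /andP[xk qk] ->.
  have pk := sg_ltk hk hkn qk.
  have h1 : x != sg q by apply: ordneq; lia.
  have h2 : sg q != q by rewrite std_moved.
  have h3 : x != q by apply: ordneq; lia.
  by rewrite /f2 /= cyc3_kcycle // fam2_good.
rewrite cardsU.
have -> : f1 @: T3 n k :&: f2 @: D2 = set0.
  apply/setP => c; rewrite !inE; apply/negP => /andP[/imsetP[[[a b] d] H1 ->] /imsetP[[x q] H2 e]].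
  move: H1 H2; rewrite /T3 /D2 !inE /= => /andP[/andP[ab bd] dk] /andP[xk qk].
  move: e; rewrite /f1 /f2 /= => e.
  have pk := sg_ltk hk hkn qk.
  have h1 : x != sg q by apply: ordneq; lia.
  have h2 : sg q != q by rewrite std_moved.
  have h3 : x != q by apply: ordneq; lia.
  have hab : a != b by apply: ordneq; lia.
  have hbd : b != d by apply: ordneq; lia.
  have had : a != d by apply: ordneq; lia.
  have := cyc3a h1 h2 h3; rewrite -e (cyc3o hab hbd had); try (apply: ordneq; lia).
  move/(congr1 (@nat_of_ord _)); lia.
rewrite cards0 subn0 (card_in_imset f1_inj) (card_in_imset f2_inj) cardT3 //.
have -> : D2 = setX [set i : 'I_n | k <= i] [set i : 'I_n | i < k].
  by apply/setP => -[x q]; rewrite !inE.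
rewrite cardsX cardS //.
have -> : [set i : 'I_n | k <= i] = ~: [set i : 'I_n | i < k].
  by apply/setP => i; rewrite !inE -leqNgt.
have := cardsC [set i : 'I_n | i < k]; rewrite cardS // card_ord => e.
by have -> : #|~: [set i : 'I_n | i < k]| = n - k by lia.
Qed.

End G.

Section Grp.
Variable n : nat.
Implicit Types (u v s t g : 'S_n).
Notation G := [set: 'S_n].

Lemma conj_fix_cent u g : (u ^ g == u) = (g \in 'C[u]).
Proof.
apply/eqP/cent1P => [e|c]; first by rewrite /commute -{1}e conjgE mulKVg.
by rewrite conjgE -c mulKg.
Qed.

Lemma fiber u (Q : pred 'S_n) :
  #|[set t | Q (u ^ t)]| = (#|'C[u]| * #|[set v in u ^: G | Q v]|)%N.
Proof.
rewrite -sum1_card (partition_big (fun t => u ^ t) (mem [set v in u ^: G | Q v])).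
  rewrite mulnC -sum_nat_const; apply: eq_bigr => v; rewrite !inE => /andP[/imsetP[t0 _ ->] Qv].
  rewrite sum1dep_card -(card_rcoset _ t0); apply: eq_card => t.
  rewrite !inE mem_rcoset -conj_fix_cent conjgM (can2_eq (conjgKV t0) (conjgK t0)).
  case: (eqVneq (u ^ t) (u ^ t0)) => [->|ne] //=; first by rewrite Qv.
  by rewrite andbF.
by move=> t; rewrite !inE => Qt; rewrite imset_f ?inE.
Qed.

Lemma orbit_stab u : (#|'C[u]| * #|u ^: G|)%N = n`!.
Proof.
have := index_cent1 [group of G] u.
rewrite setTI => <-; rewrite Lagrange ?subsetT //.
by rewrite cardsT card_Sn.
Qed.

Lemma kcyc_ge2 k s : is_kcycle k s -> 1 < k.
Proof.
move=> Hs; have [x sx Ox] := kcyc_orbit (proj1 (andP Hs)).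
by rewrite -(eqP (proj2 (andP Hs))) -Ox card_porbit_gt1.
Qed.

Lemma kcyc_le k s : is_kcycle k s -> k <= n.
Proof.
by case/andP => _ /eqP <-; apply: leq_trans (max_card _) _; rewrite card_ord.
Qed.

Definition K k := [set s : 'S_n | is_kcycle k s].

Lemma classK k s (Ks : is_kcycle k s) : s ^: G = K k.
Proof.
have hk := kcyc_ge2 Ks; have hkn := kcyc_le Ks.
apply/setP => v; rewrite inE; apply/imsetP/idP => [[g _ ->]|Kv].
  by rewrite kcycleJ.
have [g1 e1] := std_conj hk hkn Kv.
have [g2 e2] := std_conj hk hkn Ks.
exists (g2^-1 * g1); rewrite ?inE //.
by rewrite conjgM -e2 conjgK.
Qed.

Definition P3 (c : 'S_n) := is_kcycle 3 c.

Definition H k s := #|[set v in K k | P3 (v * s)]|.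

Lemma H_conj k s g : H k (s ^ g) = H k s.
Proof.
rewrite /H.
have -> : [set v in K k | P3 (v * s ^ g)] = (conjg^~ g) @: [set v in K k | P3 (v * s)].
  apply/setP => v; rewrite !inE; apply/andP/imsetP => [[Kv Pv]|[w]].
    exists (v ^ g^-1); last by rewrite conjgKV.
    by rewrite !inE kcycleJ Kv /= /P3 -(kcycleJ _ g) conjMg conjgKV.
  rewrite !inE => /andP[Kw Pw] ->.
  by rewrite kcycleJ Kw /P3 -conjMg kcycleJ.
by rewrite card_imset //; apply: conjg_inj.
Qed.

Lemma F_eq s : #|[set t | is_kcycle 3 (commf s t)]| =
  (#|'C[s^-1]| * #|[set v in s^-1 ^: G | P3 (v * s)]|)%N.
Proof.
rewrite -(fiber (s^-1) (fun v => P3 (v * s))); apply: eq_card => t.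
by rewrite !inE /P3 /commf conjgE !mulgA.
Qed.

Lemma sumK k (hk : 1 < k) (hkn : k <= n) :
  (\sum_(s in K k) #|[set t | is_kcycle 3 (commf s t)]| =
   n`! * #|[set c | is_kcycle 3 c && is_kcycle k (c * std hk hkn)]|)%N.
Proof.
set sg := std hk hkn.
have Ksg : is_kcycle k sg := std_kcycle hk hkn.
have Ksi : is_kcycle k sg^-1 by rewrite kcycleV.
have Hsg : H k sg^-1 = #|[set c | is_kcycle 3 c && is_kcycle k (c * sg)]|.
  rewrite /H.
  have -> : [set v in K k | P3 (v * sg^-1)] =
      (fun c => c * sg) @: [set c | is_kcycle 3 c && is_kcycle k (c * sg)].
    apply/setP => v; rewrite !inE; apply/andP/imsetP => [[Kv Pv]|[c]].
      by exists (v * sg^-1); rewrite ?mulgKV // inE mulgKV; apply/andP; split.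
    by rewrite inE => /andP[Pc Kc] ->; split; rewrite // /P3 mulgK.
  by rewrite card_imset //; apply: mulIg.
set c0 := #|'C[sg^-1]|.
have cK : (c0 * #|K k|)%N = n`! by rewrite -(classK Ksi) orbit_stab.
have Kpos : 0 < #|K k| by apply/card_gt0P; exists sg; rewrite inE.
rewrite (eq_bigr (fun _ => c0 * #|[set c | is_kcycle 3 c && is_kcycle k (c * sg)]|))%N.
  by rewrite sum_nat_const mulnA (mulnC #|K k|) cK.
move=> s; rewrite inE => Ks.
have Ksv : is_kcycle k s^-1 by rewrite kcycleV.
rewrite F_eq (classK Ksv) -/(H k s) -Hsg.
have /imsetP[g _ ->] : s \in sg^-1 ^: G by rewrite (classK Ksi) inE.
rewrite H_conj; congr (_ * _)%N.
apply/eqP; rewrite -(eqn_pmul2r Kpos) cK.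
by rewrite -(classK (_ : is_kcycle k ((sg^-1 ^ g)^-1))) ?orbit_stab // kcycleV kcycleJ.
Qed.

End Grp.

Local Close Scope group_scope.

Lemma bin3 m : 'C(m, 3) * 6 = m * (m - 1) * (m - 2).
Proof.
have := bin_ffact m 3; rewrite !ffactnS ffactn0 /= => ->.
by rewrite muln1 mulnA -!subn1 -subnDA.
Qed.

Lemma sumA n : 24 * \sum_(k < n.+1) 'C(k, 3) = (n + 1) * n * (n - 1) * (n - 2).
Proof.
elim: n => [|n IH]; first by rewrite big_ord_recr big_ord0.
rewrite big_ord_recr /= mulnDr IH.
have := bin3 n.+1.
case: n {IH} => [|[|m]]; rewrite ?subSS ?subn0 /= => h; nia.
Qed.

Lemma sumC n : 2 * \sum_(k < n.+1) (if 1 < k then (k : nat) else 0) = n * (n + 1) - 2.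
Proof.
elim: n => [|n IH]; first by rewrite big_ord_recr big_ord0.
rewrite big_ord_recr /= mulnDr IH.
case: n {IH} => [|[|m]] //; have -> : (1 < m.+3) = true by []; nia.
Qed.

Lemma sumB n : 6 * \sum_(k < n.+1) (if 1 < k then (n - k) * k else 0) = (n - 1) * (n - 2) * (n + 3).
Proof.
elim: n => [|n IH]; first by rewrite big_ord_recr big_ord0.
rewrite big_ord_recr /= subnn mul0n if_same addn0.
rewrite (eq_bigr (fun k : 'I_n.+1 => (if 1 < k then (n - k) * k else 0) + (if 1 < k then (k : nat) else 0))); last first.
  move=> k _ /=; case: ifP => // _; have := ltn_ord k; rewrite ltnS => kn.
  by rewrite subSn // mulSn addnC.
rewrite big_split /= mulnDr IH.
have := sumC n.
case: n {IH} => [|[|m]]; [by rewrite !big_ord_recr big_ord0 | by rewrite !big_ord_recr big_ord0 | ].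
have -> : m.+2 * (m.+2 + 1) = m.+1 * (m + 4) + 2 by nia.
rewrite addnK => h; rewrite !subSS !subn0; move: h; set S1 := (\sum_(k < m.+3) _) => h. clearbody S1. nia.
Qed.

Lemma sum_total n : 24 * \sum_(k < n.+1) (if 1 < k then 'C(k, 3) + (n - k) * k else 0) =
  (n - 1) * (n - 2) * (n ^ 2 + 5 * n + 12).
Proof.
rewrite (eq_bigr (fun k : 'I_n.+1 => 'C(k, 3) + (if 1 < k then (n - k) * k else 0))); last first.
  move=> k _; case: ifP => // /negbT; rewrite -leqNgt => k1.
  by rewrite bin_small //; lia.
rewrite big_split /= mulnDr sumA.
have := sumB n.
case: n => [|[|m]]; [by rewrite !big_ord_recr big_ord0 | by rewrite !big_ord_recr big_ord0 | ].
rewrite !subSS !subn0 => h; move: h; set S1 := (\sum_(k < m.+3) _) => h; clearbody S1; nia.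
Qed.

Section Fin.
Variable n : nat.
Local Notation F s := #|[set t : 'S_n | is_kcycle 3 (commf s t)]|.

Lemma card_B2 : #|B2 n| = \sum_(s | is_cycle s) F s.
Proof.
rewrite -sum1_card big_mkcond /=.
transitivity (\sum_(s : 'S_n) \sum_(t : 'S_n) (if (s, t) \in B2 n then 1 else 0)).
  by rewrite pair_big /=; apply: eq_bigr => -[s t].
rewrite [RHS]big_mkcond /=; apply: eq_bigr => s _.
case: ifP => cs.
  rewrite -sum1_card [RHS]big_mkcond /=; apply: eq_bigr => t _.
  by rewrite !inE /= cs andbT.
by apply: big1 => t _; rewrite inE /= cs andbF.
Qed.

Lemma sum_part : \sum_(s | is_cycle s) F s = \sum_(k < n.+1) \sum_(s in K n k) F s.
Proof.
rewrite (partition_big (fun s : 'S_n => inord #|psupp s| : 'I_n.+1) xpredT) //=.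
apply: eq_bigr => k _; apply: eq_bigl => s; rewrite inE /is_kcycle.
case: (is_cycle s) => //=.
rewrite -val_eqE /= inordK // ltnS; apply: leq_trans (max_card _) _; rewrite card_ord.
by [].
Qed.

Lemma each (k : 'I_n.+1) : \sum_(s in K n k) F s = if 1 < k then n`! * ('C(k, 3) + (n - k) * k) else 0.
Proof.
case: ifP => hk.
  have hkn : k <= n by rewrite -ltnS.
  by rewrite (sumK hk hkn) card_G.
apply: big_pred0 => s; rewrite inE; apply/negP => /kcyc_ge2; by rewrite hk.
Qed.

End Fin.

Theorem mainTheorem9 (n : nat) (hn : 2 < n) :
  24 * #|B2 n| = (n - 1) * (n - 2) * (n ^ 2 + 5 * n + 12) * n`!.
Proof.
rewrite card_B2 sum_part (eq_bigr _ (fun k _ => each k)).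
rewrite (eq_bigr (fun k : 'I_n.+1 => n`! * (if 1 < k then 'C(k, 3) + (n - k) * k else 0))); last first.
  by move=> k _; case: ifP; rewrite ?muln0.
by rewrite -big_distrr /= mulnA (mulnC 24) -mulnA sum_total mulnC.
Qed.
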